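(* Let $f$ be a participatory budgeting rule that satisfies Extended Justified Representation (EJR). Then for every ordinary approval-based PB instance $I=(N,\mathcal{T},B,\mathrm{cost},\mathcal{A})$ and every nonempty $T\subseteq\mathcal{T}$, \[ d_f(T)\;\ge\;\frac{\min_{t\in T}\mathrm{cost}(t)}{\max_{t\in T}\mathrm{cost}(t)}\cdot\frac{1}{2}\cdot\left(\frac{\mathrm{cost}(T)}{\max_{t\in T}\mathrm{cost}(t)}-1\right). \]
   Context: An approval-based PB instance is $I=(N,\mathcal{T},B,\mathrm{cost},\mathcal{A})$: $N$ is a set of $n$ voters, $\mathcal{T}$ a finite set of projects, $B>0$ a budget, $\mathrm{cost}:\mathcal{T}\to\mathbb{R}_{>0}$, with $\mathrm{cost}(S)=\sum_{t\in S}\mathrm{cost}(t)$, and $A_i\subseteq\mathcal{T}$ the projects approved by voter $i$. A PB rule $f$ maps each instance to $f(I)\subseteq\mathcal{T}$ with $\mathrm{cost}(f(I))\le B$. The instance is ordinary if $\mathrm{cost}(t)\cdot n\ge B$ for every project $t\in\mathcal{T}$. For $T\subseteq\mathcal{T}$, $V\subseteq N$ is $T$-cohesive if $T\subseteq\bigcap_{i\in V}A_i$ and $\mathrm{cost}(T)/B\le|V|/n$; $\mathcal{V}(T)$ is the set of all $T$-cohesive groups. $\mathrm{avg}_W(V)=\frac{1}{|V|}\sum_{i\in V}|W\cap A_i|$. The proportionality degree is $d_f(T)=\sup\{g:\ \min_{V\in\mathcal{V}(T)}\mathrm{avg}_{f(I)}(V)\ge\min(|T|,g)\}$. A rule $f$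 satisfies EJR if for every instance $I$, every $T\subseteq\mathcal{T}$ and every $T$-cohesive group $V$, there is a voter $i\in V$ with $|A_i\cap f(I)|\ge|T|$. *)

(* Defs.v *)
From HB Require Import structures.
From mathcomp Require Import all_boot all_order all_algebra.
From mathcomp Require Import all_classical all_reals ereal.
Set Implicit Arguments. Unset Strict Implicit. Unset Printing Implicit Defensive.
Import Order.TTheory GRing.Theory Num.Theory.
Local Open Scope ring_scope.

Record PBInstance (R : realType) := {
  nv : nat;
  np : nat;
  budget : R;
  cost : 'I_np -> R;
  appr : 'I_nv -> {set 'I_np};
  budget_pos : 0 < budget;
  cost_pos : forall t, 0 < cost t
}.

Arguments cost {R} p _.
Arguments appr {R} p _.

Section Defs.
Variable R : realType.

Definition costS (I : PBInstance R) (S : {set 'I_(np I)}) : R :=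
  \sum_(t in S) cost I t.

Record PBRule := {
  rule_fun :> forall I : PBInstance R, {set 'I_(np I)};
  rule_feasible : forall I : PBInstance R, costS (rule_fun I) <= budget I
}.

Definition ordinary (I : PBInstance R) : Prop :=
  forall t, budget I <= cost I t * (nv I)%:R.

Definition cohesive (I : PBInstance R) (T : {set 'I_(np I)}) (V : {set 'I_(nv I)}) : Prop :=
  [/\ V != finset.set0,
      T \subset \bigcap_(i in V) appr I i
    & costS T / budget I <= #|V|%:R / (nv I)%:R].

Definition avg (I : PBInstance R) (W : {set 'I_(np I)}) (V : {set 'I_(nv I)}) : R :=
  (\sum_(i in V) #|W :&: appr I i|%:R) / #|V|%:R.

Definition EJR (f : PBRule) : Prop :=
  forall (I : PBInstance R) (T : {set 'I_(np I)}) (V : {set 'I_(nv I)}),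
    cohesive T V -> exists2 i, i \in V & (#|T| <= #|appr I i :&: f I|)%N.

(* proportionality degree d_f(T), as an extended real (sup may be +oo) *)
Definition prop_degree (f : PBRule) (I : PBInstance R) (T : {set 'I_(np I)}) : \bar R :=
  ereal_sup [set x%:E | x in [set x : R |
     forall V : {set 'I_(nv I)}, cohesive T V -> Num.min (#|T|%:R) x <= avg (f I) V]].

Definition cmax (I : PBInstance R) (T : {set 'I_(np I)}) : R :=
  \big[Num.max/0]_(t in T) cost I t.

(* for nonempty T this is min_{t in T} cost t *)
Definition cmin (I : PBInstance R) (T : {set 'I_(np I)}) : R :=
  \big[Num.min/cmax T]_(t in T) cost I t.

End Defs.

(* Main.v *)
Require Import Defs.
From HB Require Import structures.
From mathcomp Require Import all_boot all_order all_algebra.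
From mathcomp Require Import all_classical all_reals ereal.
Import Order.TTheory GRing.Theory Num.Theory.
From mathcomp Require Import ring lra zify.
Local Open Scope ring_scope.

Lemma exists_big {R : realType} {I : PBInstance R} (S : {set 'I_(np I)}) :
  S != finset.set0 -> exists2 t, t \in S & costS S <= cost I t * (#|S|)%:R.
Proof.
move=> S0.
case: (boolP [exists t in S, costS S <= cost I t * (#|S|)%:R]).
  by move/existsP => [t /andP [tS h]]; exists t.
move=> /existsPn H; exfalso.
have: \sum_(t in S) cost I t * (#|S|)%:R < \sum_(t in S) costS S.
  apply: ltr_sum.
    case/set0Pn: S0 => t tS; apply/hasP; exists t => //; exact: mem_index_enum.
  move=> t tS; move: (H t); rewrite tS /= -ltNge; done.
rewrite -big_distrl /= sumr_const -/(costS S).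
by rewrite mulr_natr ltxx.
Qed.

Lemma cheap_subset (R : realType) (I : PBInstance R) (T : {set 'I_(np I)}) (d : nat) :
  (d <= #|T|)%N -> exists2 T' : {set 'I_(np I)}, T' \subset T &
    (#|T'| = #|T| - d)%N /\ costS T' * (#|T|)%:R <= (#|T| - d)%:R * costS T.
Proof.
elim: d => [|d IH] hd.
  exists T => //; rewrite subn0; split => //; by rewrite mulrC.
have [T' sub [cT' cst]] := IH (ltnW hd).
have T'0 : T' != finset.set0 by rewrite -card_gt0 cT'; lia.
have [t tT' ht] := exists_big _ T'0.
exists (T' :\ t).
  exact: (fintype.subset_trans (subD1set T' t) sub).
have hc := cardsD1 t T'; rewrite tT' in hc.
split; first by lia.
have hm : ((#|T| - d) = (#|T| - d.+1) + 1)%N by lia.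
move: cst ht; rewrite cT' hm natrD /costS (big_setD1 _ tT') /=.
set S' := \sum_(i in T' :\ t) cost I i.
set m := (#|T| - d.+1)%:R.
set K := (#|T|)%:R.
set C := \sum_(i in T) cost I i.
set c := cost I t.
have m0 : 0 <= m by [].
have K0 : 0 <= K by [].
move=> h1 h2.
(* (c + S') K <= (m+1) C ; c + S' <= c (m+1) -> S' <= c m *)
have h3 : S' * K <= c * m * K by apply: ler_wpM2r => //; lra.
have h4 : (m + 1) * (S' * K) <= m * ((c + S') * K).
  have : (m+1) * (S' * K) = S' * K + m * (S' * K) by ring.
  move=> ->.
  have : m * ((c + S') * K) = m * c * K + m * (S' * K) by ring.
  move=> ->.
  suff : S' * K <= m * c * K by lra.
  by rewrite (mulrC m c).
have h5 : m * ((c + S') * K) <= m * ((m + 1) * C) by apply: ler_wpM2l.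
have h6 : (m + 1) * (S' * K) <= (m + 1) * (m * C).
  apply: (le_trans h4); apply: (le_trans h5); lra.
by rewrite ler_pM2l in h6; lra.
Qed.

Lemma sum_lt_le (k m : nat) : (\sum_(l < k) ((l < m)%N : nat) <= m)%N.
Proof.
elim: k => [|k IH]; first by rewrite big_ord0.
rewrite big_ord_recr /=.
have hk : (\sum_(l < k) ((l < m)%N : nat) <= k)%N.
  apply: (@leq_trans (\sum_(l < k) 1)); first by apply: leq_sum => i _; case: (_ < _)%N.
  by rewrite sum1_card card_ord.
case: (ltnP k m) => h /=; [by rewrite addn1; apply: leq_ltn_trans hk h | by rewrite addn0].
Qed.

Lemma sum_tri (k : nat) : (2 * \sum_(l < k) (k - l.+1) = k * k.-1)%N.
Proof.
elim: k => [|k IH]; first by rewrite big_ord0.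
rewrite big_ord_recl /=.
rewrite (eq_bigr (fun l : 'I_k => k - l.+1)%N); last first.
  move=> i _; rewrite /bump /=; lia.
rewrite mulnDr IH; case: k {IH} => [|k] /=; lia.
Qed.

Lemma card_cond (T : finType) (V : {set T}) (P : pred T) :
  #|[set i in V | P i]| = (\sum_(i in V) (P i : nat))%N.
Proof.
rewrite -sum1_card big_mkcond [RHS]big_mkcond /=; apply: eq_bigr => i _.
by rewrite inE; case: (i \in V); case: (P i).
Qed.

Section Main.
Variable R : realType.
Variable f : PBRule R.
Hypothesis hf : EJR f.
Variable I : PBInstance R.

Local Notation sat i := #|f I :&: appr I i|.

Lemma few_low (T : {set 'I_(np I)}) (V : {set 'I_(nv I)}) (hV : cohesive T V)
  (l : nat) (hl : (l < #|T|)%N) :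
  (#|T| * #|[set i in V | (sat i <= l)%N]| <= l.+1 * #|V|)%N.
Proof.
set L := [set i in V | (sat i <= l)%N].
rewrite leqNgt; apply/negP => hlt.
have [T' sub [cT' cst]] := @cheap_subset R I T (#|T| - l.+1)%N (leq_subr _ _).
rewrite subKn in cT' cst; last exact: hl.
case: hV => V0 subV hC.
have hs : (0 < #|V|)%N by rewrite card_gt0.
have hn : (0 < nv I)%N.
  by apply: (leq_trans hs); rewrite -[X in (_ <= X)%N]card_ord; exact: max_card.
have L0 : L != finset.set0.
  rewrite -card_gt0; case: (posnP #|L|) => h //; by rewrite h muln0 in hlt.
have subL : T' \subset \bigcap_(i in L) appr I i.
  apply/bigcapsP => i; rewrite inE => /andP [iV _].
  apply: (fintype.subset_trans sub); move/bigcapsP: subV; apply; exact: iV.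
have cohL : cohesive T' L.
  split => //.
  have B0 := budget_pos I.
  have n0 : 0 < (nv I)%:R :> R by rewrite ltr0n.
  move: hC; rewrite ler_pdivlMr // mulrAC ler_pdivrMr // => hC.
  rewrite ler_pdivlMr // mulrAC ler_pdivrMr //.
  have k0 : 0 < (#|T|)%:R :> R by rewrite ltr0n; lia.
  have hlt' : (l.+1)%:R * (#|V|)%:R <= (#|T|)%:R * (#|L|)%:R :> R.
    by rewrite -!natrM ler_nat ltnW.
  set c' := costS T' in cst *; set C := costS T in cst hC.
  set n := (nv I)%:R in n0 hC *; set s := (#|V|)%:R in hC hlt'.
  set k := (#|T|)%:R in k0 cst hlt'; set m := (#|L|)%:R in hlt' *.
  set B := budget I in B0 hC *. set a := (l.+1)%:R in cst hlt'.
  have a0 : 0 <= a by [].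
  have h1 : c' * k * n <= a * C * n by apply: ler_wpM2r => //; exact: ltW.
  have h2 : a * (C * n) <= a * (s * B) by apply: ler_wpM2l.
  have h3 : a * s * B <= k * m * B by apply: ler_wpM2r => //; exact: ltW.
  have h4 : k * (c' * n) <= k * (m * B).
    have -> : k * (c' * n) = c' * k * n by ring.
    have -> : k * (m * B) = k * m * B by ring.
    apply: (le_trans h1); apply: le_trans h3.
    have -> : a * C * n = a * (C * n) by ring.
    by have -> : a * s * B = a * (s * B) by ring.
  by rewrite ler_pM2l in h4.
have [i iL] := hf _ _ _ cohL.
rewrite cT' finset.setIC; move: iL; rewrite inE => /andP [_ hi] h; lia.
Qed.


Lemma sum_bound (T : {set 'I_(np I)}) (V : {set 'I_(nv I)}) (hV : cohesive T V) :
  (#|V| * (#|T|).-1 <= 2 * \sum_(i in V) sat i)%N.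
Proof.
set k := #|T|. set s := #|V|. set X := (\sum_(i in V) sat i)%N.
case: (posnP k) => [k0 | kpos]; first by rewrite k0 muln0.
have step1 : (\sum_(l < k) #|[set i in V | (l < sat i)%N]| <= X)%N.
  rewrite (eq_bigr (fun l : 'I_k => \sum_(i in V) ((l < sat i)%N : nat))%N); last first.
    by move=> l _; rewrite card_cond.
  rewrite exchange_big /=; apply: leq_sum => i _; exact: sum_lt_le.
have hc : forall l : 'I_k, (s * (k - l.+1) <= k * #|[set i in V | (l < sat i)%N]|)%N.
  move=> l.
  have hL := @few_low T V hV l (ltn_ord l).
  have hp : (#|[set i in V | (l < sat i)%N]| + #|[set i in V | (sat i <= l)%N]| = s)%N.
    rewrite /s -(cardsID [set i | (sat i <= l)%N] V) addnC.
    congr (_ + _); apply: eq_card => i; rewrite !inE ?ltnNge //.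
    by case: (i \in V); case: (_ <= _)%N.
  move: hL hp; rewrite -/k -/s.
  set a := #|[set i in V | (l < sat i)%N]|.
  set b := #|[set i in V | (sat i <= l)%N]|.
  have := ltn_ord l; nia.
have hsum : (s * \sum_(l < k) (k - l.+1) <= k * X)%N.
  rewrite big_distrr /=; apply: (leq_trans _ (leq_mul (leqnn k) step1)).
  rewrite big_distrr; apply: leq_sum => l _; exact: hc.
have := sum_tri k.
rewrite -(leq_pmul2l kpos).
set D := (\sum_(l < k) (k - l.+1))%N in hsum *.
nia.
Qed.

End Main.

Theorem theorem3 (R : realType) (f : PBRule R) (hf : EJR f)
  (I : PBInstance R) (hI : ordinary I) (T : {set 'I_(np I)}) (hT : T != finset.set0) :
  (((cmin T / cmax T) * (1 / 2) * (costS T / cmax T - 1))%:E <= prop_degree f T)%E.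
Proof.
set k := #|T|.
have k1 : (1 <= k)%N by rewrite card_gt0.
case/set0Pn: (hT) => t0 t0T.
have hcle : forall t, t \in T -> cost I t <= cmax T.
  by move=> t tT; rewrite /cmax (bigD1 t) //= le_max lexx.
have cmax0 : 0 < cmax T by rewrite (lt_le_trans _ (hcle _ t0T)) // cost_pos.
have cmin0 : 0 <= cmin T.
  rewrite /cmin; apply: (big_ind (fun x => 0 <= x)).
  - exact: ltW.
  - by move=> x y hx hy; rewrite le_min hx hy.
  - by move=> t _; apply: ltW; apply: cost_pos.
have cminle : cmin T <= cmax T.
  rewrite /cmin; apply: (big_ind (fun x => x <= cmax T)) => //.
  - by move=> x y hx _; rewrite ge_min hx.
have Cle : costS T <= k%:R * cmax T.
  rewrite /costS mulr_natl -sumr_const; apply: ler_sum => t tT; exact: hcle.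
set r := cmin T / cmax T.
set q := costS T / cmax T.
have r0 : 0 <= r by rewrite /r divr_ge0 // ltW.
have r1 : r <= 1 by rewrite /r ler_pdivrMr // mul1r.
have qk : q <= k%:R by rewrite /q ler_pdivrMr.
have kk : 1 <= k%:R :> R by rewrite ler1n.
set g := r * (1 / 2) * (q - 1).
have hg : g <= (k%:R - 1) / 2.
  rewrite /g; case: (lerP 1 q) => hq; nra.
have key : forall V, cohesive T V -> g <= avg (f I) V.
  move=> V hV.
  have hb := @sum_bound R f hf I T V hV.
  have s0 : (0 < #|V|)%N by case: hV => V0 _ _; rewrite card_gt0.
  rewrite /avg -natr_sum ler_pdivlMr ?ltr0n //.
  set X := (\sum_(i in V) #|f I :&: appr I i|)%N in hb *.
  have hb' : (#|V|%:R * (k%:R - 1) <= 2 * X%:R :> R).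
    rewrite -subn1 in hb; move: hb; rewrite -(ler_nat R) !natrM natrB //.
  have s0' : 0 < (#|V|)%:R :> R by rewrite ltr0n.
  nra.
rewrite /prop_degree; apply: ereal_sup_ubound; exists g => //.
move=> V hV; rewrite ge_min; apply/orP; right; exact: key.
Qed.
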